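(* Let $G$ be a finite group and $p$ a prime. A super class function $\varphi\in C(G)$ is a mod $p$ resolving function for $G$ if and only if $\theta^{-1}(\varphi)$ lies in the image of the mark homomorphism $\rho\colon B(G)\to C(G)$ and $\theta^{-1}(\varphi)(K)=0$ for every $p$-hypoelementary subgroup $K\le G$.
   Context: $C(G)$ is the group of super class functions: integer-valued functions on the set of subgroups of $G$ that are constant on conjugacy classes. $B(G)$ is the Burnside ring of finite $G$-sets, and the mark homomorphism $\rho\colon B(G)\to C(G)$ is given by $\rho([G/K])(L)=|(G/K)^L|$. The map $\theta^{-1}\colon C(G)\to C(G)$ is $\theta^{-1}(f)(K)=\sum_{L\ge K}f(L)$, the sum over all subgroups $L$ of $G$ containing $K$ (its inverse $\theta$ is given by the Möbius function of the subgroup poset). $W_G(K)=N_G(K)/K$. A subgroup $H$ is $p$-hypoelementary if it has a normal $p$-subgroup $P$ with $H/P$ cyclic of order prime to $p$. A mod $p$ resolving function for $G$ is $\varphi\in C(G)$ such that (1) $|N_G(K)/K|$ divides $\varphi(K)$ for all $K\le G$, and (2) $\sum_{L\ge K}\varphi(L)=0$ for every $p$-hypoelementary $K\le G$. *)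

(* Defs.v *)
From HB Require Import structures.
From mathcomp Require Import all_boot all_order all_algebra all_fingroup all_solvable.
Set Implicit Arguments. Unset Strict Implicit. Unset Printing Implicit Defensive.
Import GRing.Theory Num.Theory.
Local Open Scope group_scope.

(* A function on subgroups is modelled as phi : {group gT} -> int; only its
   values on subgroups of G matter. *)

Definition super_class_fun (gT : finGroupType) (G : {group gT})
  (phi : {group gT} -> int) : Prop :=
  forall (H : {group gT}) (g : gT), H \subset G -> g \in G ->
    phi (H :^ g)%G = phi H.

Definition theta_inv (gT : finGroupType) (G : {group gT})
  (f : {group gT} -> int) (K : {group gT}) : int :=
  (\sum_(L : {group gT} | (L \subset G) && (K \subset L)) f L)%R.

(* |(G/K)^L| : number of left cosets xK (x in G) fixed by left mult. by L. *)
Definition marks (gT : finGroupType) (G K L : {group gT}) : nat :=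
  #|[set C in lcosets K G | [forall l in L, l *: C == C]]|.

(* f lies in the image of the mark homomorphism rho : B(G) -> C(G):
   f = rho(sum_K a_K [G/K]) for some integer coefficients a_K
   (K ranging over subgroups of G). *)
Definition in_mark_image (gT : finGroupType) (G : {group gT})
  (f : {group gT} -> int) : Prop :=
  exists a : {group gT} -> int,
    forall L : {group gT}, L \subset G ->
      f L = (\sum_(K : {group gT} | K \subset G) a K * (marks G K L)%:Z)%R.

Definition hypoelementary (p : nat) (gT : finGroupType) (H : {group gT}) : Prop :=
  exists P : {group gT},
    [/\ P <| H, p.-group P, cyclic (H / P) & coprime #|H / P| p].

Definition resolving (p : nat) (gT : finGroupType) (G : {group gT})
  (phi : {group gT} -> int) : Prop :=
  (forall K : {group gT}, K \subset G ->
     (#|'N_G(K) / K|%:Z %| phi K)%Z) /\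
  (forall K : {group gT}, K \subset G -> hypoelementary p K ->
     theta_inv G phi K = 0%R).

(* Main.v *)
Require Import Defs.
From mathcomp Require Import all_boot all_order all_algebra all_fingroup all_solvable.
From mathcomp Require Import zify.
Set Implicit Arguments. Unset Strict Implicit. Unset Printing Implicit Defensive.
Import GRing.Theory Num.Theory.
Local Open Scope group_scope.

Section Counting.
Variable gT : finGroupType.
Implicit Types G K L : {group gT}.

Lemma fix_coset K (x l : gT) : (l *: (x *: K) == x *: K) = (l \in K :^ x^-1).
Proof.
rewrite -lcosetM mem_conjgV; apply/eqP/idP.
  move=> E; have : l * x \in x *: K by rewrite -E lcoset_refl.
  by rewrite mem_lcoset conjgE.
by move=> H; apply/lcoset_eqP; rewrite mem_lcoset -conjgE.
Qed.

Definition Tset G K L := [set x in G | L \subset K :^ x^-1].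

Lemma marks_T G K L : K \subset G -> #|Tset G K L| = (#|K| * marks G K L)%N.
Proof.
move=> sKG; rewrite /marks mulnC.
set P := [set C in lcosets K G | _].
apply: card_uniform_partition.
  by move=> C; rewrite inE => /andP[/lcosetsP[x _ ->] _]; rewrite card_lcoset.
apply/and3P; split.
- apply/eqP/setP => y; apply/bigcupP/idP.
    move=> [C]; rewrite inE => /andP[/lcosetsP[x xG ->] /forall_inP fx] yC.
    have yG : y \in G by move: yC => /lcosetP[k kK ->]; rewrite groupM // (subsetP sKG).
    have ey : y *: K = x *: K by apply/lcoset_eqP.
    rewrite inE yG; apply/subsetP => l lL; rewrite -fix_coset ey; exact: fx.
  rewrite inE => /andP[yG sL]; exists (y *: K); last exact: lcoset_refl.
  rewrite inE; apply/andP; split; first by apply/lcosetsP; exists y.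
  by apply/forall_inP => l lL; rewrite fix_coset (subsetP sL).
- apply/trivIsetP => A B; rewrite !inE => /andP[/lcosetsP[x _ ->] _] /andP[/lcosetsP[y _ ->] _] neq.
  apply/pred0P => z /=; apply/negbTE/negP => /andP[zx zy].
  by move: neq; rewrite -(lcoset_eqP zx) -(lcoset_eqP zy) eqxx.
- rewrite inE negb_and; apply/orP; left; apply/negP => /lcosetsP[x _ E].
  by have := lcoset_refl K x; rewrite -E inE.
Qed.


Definition Cset G K L :=
  [set H : {group gT} | [&& H \subset G, L \subset H & gval H \in K :^: G]].

Lemma conj_sub G K (y : gT) : K \subset G -> y \in G -> K :^ y \subset G.
Proof. by move=> sKG yG; rewrite -(conjGid yG) conjSg. Qed.

Lemma conjJeq K (x y : gT) : (K :^ x^-1 == K :^ y) = (y * x \in 'N(K)).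
Proof.
rewrite -(inj_eq (@conjsg_inj _ x)) conjsgKV -conjsgM eq_sym.
by apply/eqP/normP.
Qed.

Lemma T_cnt G K L : K \subset G ->
  #|Tset G K L| = (#|Cset G K L| * #|'N_G(K)|)%N.
Proof.
move=> sKG; rewrite -sum1_card.
rewrite (partition_big (fun x => (K :^ x^-1)%G) (mem (Cset G K L))) /=; last first.
  move=> x; rewrite !inE => /andP[xG sL]; rewrite sL conj_sub ?groupV //=.
  by apply: imset_f; rewrite groupV.
rewrite -sum_nat_const; apply: eq_bigr => H; rewrite inE => /and3P[sHG sLH /imsetP[y yG E]].
rewrite sum1dep_card -(card_lcoset ('N_G(K)) y^-1); apply: eq_card => x.
rewrite [in RHS]mem_lcoset invgK inE [in RHS]inE groupMl // inE -val_eqE /= E conjJeq inE.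
case xG: (x \in G) => //=.
case: (boolP (K :^ (y * x) \subset K)) => nx; rewrite ?andbF ?andbT //.
have : y * x \in 'N(K) by rewrite inE.
by rewrite -conjJeq => /eqP ->; rewrite -E.

Qed.


Lemma marksE G K L : K \subset G ->
  marks G K L = (#|'N_G(K) / K| * #|Cset G K L|)%N.
Proof.
move=> sKG; have sKN : K \subset 'N_G(K) by rewrite subsetI sKG normG.
rewrite card_quotient ?subsetIr //.
apply/eqP; rewrite -(eqn_pmul2l (cardG_gt0 K)) -marks_T // T_cnt //.
by rewrite -(Lagrange sKN) mulnC -mulnA.
Qed.

End Counting.

Section Theta.
Variable gT : finGroupType.
Implicit Types G K L H : {group gT}.
Local Open Scope ring_scope.

Definition psi G (a : {group gT} -> int) (H : {group gT}) : int :=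
  \sum_(K : {group gT} | (K \subset G) && (gval H \in K :^: G))
     a K * (#|'N_G(K) / K|%g)%:Z.

Lemma mark_theta G a L : L \subset G ->
  \sum_(K : {group gT} | K \subset G) a K * (marks G K L)%:Z
  = theta_inv G (psi G a) L.
Proof.
move=> sLG; rewrite /theta_inv /psi.
rewrite (exchange_big_dep (fun K : {group gT} => K \subset G)) /=; last first.
  by move=> H K _ /andP[].
apply: eq_bigr => K sKG.
rewrite (eq_bigl (fun H => H \in Cset G K L)); last first.
  by move=> H; rewrite !inE sKG /= andbA.
by rewrite sumr_const marksE // PoszM mulrA -mulr_natr natz.
Qed.

Lemma theta_inj G (h : {group gT} -> int) :
  (forall L, L \subset G -> theta_inv G h L = 0) ->
  forall K, K \subset G -> h K = 0.
Proof.
move=> H0 K.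
move: {2}(#|G| - #|K|)%N (leqnn (#|G| - #|K|)%N) => n.
elim: n K => [|n IH] K le sKG.
  have eKG : gval K = gval G.
    apply/eqP; rewrite eqEcard sKG /=; by rewrite -subn_eq0 -leqn0.
  have := H0 K sKG; rewrite /theta_inv (bigD1 K) /= ?sKG ?subxx //.
  rewrite big1 ?addr0 // => L /andP[/andP[sLG sKL] nLK].
  case/negP: nLK; apply/eqP/val_inj/eqP; rewrite eqEcard (subset_leq_card sKL) andbT. by rewrite /= eKG.
have := H0 K sKG; rewrite /theta_inv (bigD1 K) /= ?sKG ?subxx //.
rewrite big1 ?addr0 // => L /andP[/andP[sLG sKL] nLK].
have pKL : K \proper L.
  rewrite properEneq sKL andbT; apply: contra nLK => /eqP e.
  by apply/eqP/val_inj.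
have c1 := proper_card pKL; have c2 := subset_leq_card sLG.
apply: IH sLG; move: le; lia.
Qed.

End Theta.

Section Main.
Variable gT : finGroupType.
Implicit Types G K L H : {group gT}.
Local Open Scope ring_scope.

Definition crep G K : {group gT} :=
  odflt K [pick H : {group gT} | gval H \in K :^: G].

Lemma class_eq G K H : gval H \in K :^: G -> H :^: G = K :^: G.
Proof. by case/imsetP => y yG ->; rewrite conjugates_conj lcoset_id. Qed.

Lemma class_self G K : gval K \in K :^: G.
Proof. by apply/imsetP; exists 1%g; rewrite ?group1 ?conjsg1. Qed.

Lemma crep_in G K : gval (crep G K) \in K :^: G.
Proof.
rewrite /crep; case: pickP => [H //|none].
by have := none K; rewrite class_self.
Qed.

Lemma crep_eq G K H : gval H \in K :^: G -> crep G H = crep G K.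
Proof.
move=> hK; rewrite /crep (class_eq hK).
case: pickP => [//|none].
by have := none K; rewrite class_self.
Qed.

Lemma crep_sub G K : K \subset G -> crep G K \subset G.
Proof.
by move=> sKG; case/imsetP: (crep_in G K) => y yG ->; apply: conj_sub.
Qed.

Lemma crep_phi G K (phi : {group gT} -> int) : super_class_fun G phi ->
  K \subset G -> phi (crep G K) = phi K.
Proof.
move=> sc sKG; case/imsetP: (crep_in G K) => y yG E.
have -> : crep G K = (K :^ y)%G by apply: val_inj.
exact: sc.
Qed.

Lemma W_conj G K H : gval H \in K :^: G -> K \subset G ->
  #|'N_G(H) / H|%g = #|'N_G(K) / K|%g.
Proof.
case/imsetP => y yG E sKG.
rewrite !card_quotient ?subsetIr // E normJ -{1}(conjGid yG) -conjIg.
exact: indexJg.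
Qed.

End Main.

Theorem lemma3p10 (gT : finGroupType) (G : {group gT}) (p : nat)
  (phi : {group gT} -> int) :
  prime p -> super_class_fun G phi ->
  (resolving p G phi <->
   (in_mark_image G (theta_inv G phi) /\
    (forall K : {group gT}, K \subset G -> hypoelementary p K ->
       theta_inv G phi K = 0%R))).
Proof.
move=> _ sc; split.
  case=> dv hz; split; last exact: hz.
  exists (fun K => if crep G K == K then (phi K %/ (#|'N_G(K) / K|%g)%:Z)%Z else 0%R).
  move=> L sLG; rewrite mark_theta //; apply: eq_bigr => H /andP[sHG _].
  rewrite /psi (bigD1 (crep G H)) /=; last first.
    by rewrite crep_sub //= (class_eq (crep_in G H)) class_self.
  rewrite (crep_eq (crep_in G H)) eqxx divzK ?dv ?crep_sub // crep_phi //.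
  rewrite big1 ?GRing.addr0 // => K /andP[/andP[sKG hK] nK].
  by rewrite -(crep_eq hK) eq_sym (negbTE nK) GRing.mul0r.
case=> [[a ha] hz]; split; last exact: hz.
move=> K sKG.
have e : forall L : {group gT}, L \subset G ->
    theta_inv G (fun H => phi H - psi G a H)%R L = 0%R.
  move=> L sL; rewrite /theta_inv GRing.sumrB.
  have := ha L sL; rewrite mark_theta // /theta_inv => ->.
  by rewrite GRing.subrr.
have := theta_inj e sKG => /eqP; rewrite GRing.subr_eq0 => /eqP ->.
apply: rpred_sum => K' /andP[sK'G hK].
by rewrite (W_conj hK sK'G); apply: dvdz_mull; apply: dvdzz.
Qed.
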